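(* Let $R$ be a left PBW ring over the skew field $\mathbb D$ in $x_1,\dots,x_n$ with respect to an admissible ordering $\preceq$. Then the standard monomials $\{\mathbf x^{\alpha}:\alpha\in\mathbb N^n\}$ also form a basis of $R$ as a right $\mathbb D$-vector space (i.e. $R$ is a PBW ring) if and only if for each $i=1,\dots,n$ the map $(-)^{\epsilon_i}:\mathbb D\to\mathbb D$ is an automorphism of $\mathbb D$.
   Context: Let $R$ be a ring containing a skew field $\mathbb D$ and elements $x_1,\dots,x_n$; write $\mathbf x^\alpha=x_1^{\alpha_1}\cdots x_n^{\alpha_n}$ for $\alpha\in\mathbb N^n$. $R$ is left polynomial over $\mathbb D$ in $x_1,\dots,x_n$ if $\{\mathbf x^\alpha\}$ is a basis of $R$ as a left $\mathbb D$-vector space, so each $f$ has a unique standard representation $f=\sum c_\alpha\mathbf x^\alpha$; $\mathcal N(f)=\{\alpha:c_\alpha\ne0\}$. A total order $\preceq$ on $\mathbb N^n$ is admissible if $0\preceq\alpha$ for all $\alpha$ and $\alpha\preceq\beta\Rightarrow\alpha+\gamma\preceq\beta+\gamma$. $\exp(f)=\max_\preceq\mathcal N(f)$ for $f\ne0$, $\exp(0)=-\infty$. $R$ is a left PBW ring with respect to $\preceq$ if it is left polynomial and $\exp(fg)=\exp(f)+\exp(g)$ for all $f,g\in R$. $\epsilon_i\in\mathbb N^n$ is the $i$-th unit vector. In a left PBW ring, for $0\ne a\in\mathbb D$, $a^{\epsilon_i}$ denotes the (nonzero) coefficient of $\mathbf x^{\epsilon_i}=x_i$ in the standard representation of $x_ia$,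 so $x_ia=a^{\epsilon_i}x_i+p$ with $\exp(p)\prec\epsilon_i$; set $0^{\epsilon_i}=0$. The map $a\mapsto a^{\epsilon_i}$ is a ring endomorphism of $\mathbb D$. *)

(* Defs.v *)
From HB Require Import structures.
From mathcomp Require Import all_boot all_order all_algebra.
Set Implicit Arguments. Unset Strict Implicit. Unset Printing Implicit Defensive.
Import GRing.Theory.
Local Open Scope ring_scope.

Definition mexp (n : nat) := {ffun 'I_n -> nat}.
Definition madd (n : nat) (a b : mexp n) : mexp n := [ffun i => (a i + b i)%N].
Definition mzero (n : nat) : mexp n := [ffun => 0%N].
Definition eps (n : nat) (i : 'I_n) : mexp n := [ffun j => nat_of_bool (j == i)].

Definition monom (R : nzRingType) (n : nat) (x : 'I_n -> R) (a : mexp n) : R :=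
  \prod_(i < n) x i ^+ a i.

Definition admissible (n : nat) (le : rel (mexp n)) : Prop :=
  reflexive le /\ antisymmetric le /\ transitive le /\ total le /\
  (forall a, le (mzero n) a) /\
  (forall a b c, le a b -> le (madd a c) (madd b c)).

Section Poly.
Variables (D : unitRingType) (R : nzRingType) (iota : {rmorphism D -> R}).
Variables (n : nat) (x : 'I_n -> R).

Definition left_polynomial : Prop :=
  (forall f : R, exists (s : seq (mexp n)) (c : mexp n -> D),
      f = \sum_(a <- s) iota (c a) * monom x a) /\
  (forall (s : seq (mexp n)) (c : mexp n -> D), uniq s ->
      \sum_(a <- s) iota (c a) * monom x a = 0 -> forall a, a \in s -> c a = 0).

Definition right_polynomial : Prop :=
  (forall f : R, exists (s : seq (mexp n)) (c : mexp n -> D),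
      f = \sum_(a <- s) monom x a * iota (c a)) /\
  (forall (s : seq (mexp n)) (c : mexp n -> D), uniq s ->
      \sum_(a <- s) monom x a * iota (c a) = 0 -> forall a, a \in s -> c a = 0).

Definition std_left (f : R) (s : seq (mexp n)) (c : mexp n -> D) : Prop :=
  [/\ uniq s, (forall a, a \in s -> c a != 0) &
      f = \sum_(a <- s) iota (c a) * monom x a].

Definition is_exp (le : rel (mexp n)) (f : R) (e : mexp n) : Prop :=
  exists s c, [/\ std_left f s c, e \in s & forall a, a \in s -> le a e].

Definition lcoef (f : R) (e : mexp n) (d : D) : Prop :=
  exists s c, std_left f s c /\
    ((e \in s /\ c e = d) \/ (e \notin s /\ d = 0)).

(* left PBW ring: left polynomial and exp(fg) = exp(f) + exp(g)
   (for f = 0 or g = 0 both sides are -infinity, so only nonzero f, g matter) *)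
Definition left_PBW (le : rel (mexp n)) : Prop :=
  left_polynomial /\
  (forall f g ef eg, is_exp le f ef -> is_exp le g eg -> is_exp le (f * g) (madd ef eg)).

End Poly.

(* Main.v *)
From Stdlib Require Import ClassicalEpsilon Classical.
Require Import Defs.
From HB Require Import structures.
From mathcomp Require Import all_boot all_order all_algebra.
Set Implicit Arguments. Unset Strict Implicit. Unset Printing Implicit Defensive.
Import GRing.Theory.
Local Open Scope ring_scope.

Section Norm.
Variables (n : nat) (D : zmodType) (V : zmodType) (G : mexp n -> D -> V).
Hypothesis G0 : forall a, G a 0 = 0.
Hypothesis GD : forall a u v, G a (u + v) = G a u + G a v.

Lemma normalize (s : seq (mexp n)) (c : mexp n -> D) :
  exists t (C : mexp n -> D), [/\ uniq t, (forall a, a \notin t -> C a = 0) &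
    \sum_(a <- s) G a (c a) = \sum_(a <- t) G a (C a)].
Proof.
elim: s => [|a0 s [t [C [ut Ct IH]]]].
  by exists [::], (fun _ => 0); split => //; rewrite !big_nil.
rewrite big_cons IH.
case: (boolP (a0 \in t)) => a0t.
  exists t, (fun a => if a == a0 then C a + c a0 else C a); split => //.
    by move=> a at'; case: eqP => [e|_]; [rewrite e a0t in at' | apply: Ct].
  rewrite !(bigD1_seq _ a0t ut) /= eqxx GD.
  rewrite [G a0 (C a0) + _]addrC -!addrA; congr (_ + _).
  by apply: congr1; apply: eq_bigr => a /negPf ->.
exists (a0 :: t), (fun a => if a == a0 then c a0 else C a); split.
- by rewrite /= a0t.
- move=> a; rewrite inE negb_or => /andP [/negPf -> at']; exact: Ct.
- rewrite big_cons eqxx; congr (_ + _).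
  apply: eq_big_seq => a at'.
  by case: eqP => // e; rewrite -e at' in a0t.
Qed.

Lemma normalize2 (ps : seq (mexp n * D)) :
  exists t (C : mexp n -> D), [/\ uniq t, (forall a, a \notin t -> C a = 0) &
    \sum_(p <- ps) G p.1 p.2 = \sum_(a <- t) G a (C a)].
Proof.
elim: ps => [|[a0 c0] s [t [C [ut Ct IH]]]].
  by exists [::], (fun _ => 0); split => //; rewrite !big_nil.
rewrite big_cons IH /=.
case: (boolP (a0 \in t)) => a0t.
  exists t, (fun a => if a == a0 then C a + c0 else C a); split => //.
    by move=> a at'; case: eqP => [e|_]; [rewrite e a0t in at' | apply: Ct].
  rewrite !(bigD1_seq _ a0t ut) /= eqxx GD.
  rewrite [G a0 (C a0) + _]addrC -!addrA; congr (_ + _).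
  by apply: congr1; apply: eq_bigr => a /negPf ->.
exists (a0 :: t), (fun a => if a == a0 then c0 else C a); split.
- by rewrite /= a0t.
- move=> a; rewrite inE negb_or => /andP [/negPf -> at']; exact: Ct.
- rewrite big_cons eqxx; congr (_ + _).
  apply: eq_big_seq => a at'.
  by case: eqP => // e; rewrite -e at' in a0t.
Qed.
End Norm.

Section PBW.
Variables (D : unitRingType) (R : nzRingType) (iota : {rmorphism D -> R}).
Variables (n : nat) (x : 'I_n -> R) (le : rel (mexp n)).
Hypothesis HD : forall a : D, a != 0 -> a \is a GRing.unit.
Hypothesis Hle : admissible le.
Hypothesis HR : left_PBW iota x le.

Local Notation m := (monom x).

Definition rep (f : R) (s : seq (mexp n)) (F : mexp n -> D) :=
  [/\ uniq s, forall a, a \notin s -> F a = 0 & f = \sum_(a <- s) iota (F a) * m a].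

Lemma sum_ext (s t : seq (mexp n)) (G : mexp n -> R) :
  uniq s -> uniq t -> {subset s <= t} -> (forall a, a \notin s -> G a = 0) ->
  \sum_(a <- s) G a = \sum_(a <- t) G a.
Proof.
move=> us ut st G0.
rewrite [RHS](eq_bigr (fun a => if a \in s then G a else 0)); last first.
  by move=> a _; case: ifP => // /negbT /G0.
rewrite -big_mkcond -big_filter; apply: perm_big.
apply: uniq_perm => //; first exact: filter_uniq.
by move=> a; rewrite mem_filter; case: (boolP (a \in s)) => //= /st ->.
Qed.

Lemma exists_rep f : exists s F, rep f s F.
Proof.
have [[/(_ f) [s [c ->]] _] _] := HR.
have G0 : forall a, (fun a u => iota u * m a) a 0 = 0.
  by move=> a /=; rewrite rmorph0 mul0r.
have GD : forall a u v, (fun a u => iota u * m a) a (u + v) =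
   (fun a u => iota u * m a) a u + (fun a u => iota u * m a) a v.
  by move=> a u v /=; rewrite rmorphD mulrDl.
have [t [C [ut Ct ->]]] := normalize GD s c.
by exists t, C.
Qed.

Lemma rep_uniq f s t F G : rep f s F -> rep f t G -> F =1 G.
Proof.
move=> [us Fs ef] [ut Gt eg] a.
set u := undup (s ++ t).
have uu : uniq u by apply: undup_uniq.
have su : {subset s <= u} by move=> b bs; rewrite mem_undup mem_cat bs.
have tu : {subset t <= u} by move=> b bt; rewrite mem_undup mem_cat bt orbT.
have e1 : f = \sum_(b <- u) iota (F b) * m b.
  by rewrite ef; apply: sum_ext => // b /Fs ->; rewrite rmorph0 mul0r.
have e2 : f = \sum_(b <- u) iota (G b) * m b.
  by rewrite eg; apply: sum_ext => // b /Gt ->; rewrite rmorph0 mul0r.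
have [_ indep] := HR.1.
have H0 : \sum_(b <- u) iota ((fun b => F b - G b) b) * m b = 0.
  by rewrite (eq_bigr (fun b => iota (F b) * m b - iota (G b) * m b)) ?sumrB -?e1 -?e2 ?subrr // => b _; rewrite rmorphB mulrBl.
case: (boolP (a \in u)) => au.
  by apply/eqP; rewrite -subr_eq0; apply/eqP; apply: (indep _ _ uu H0).
rewrite mem_undup mem_cat negb_or in au; case/andP: au => /Fs -> /Gt -> //.
Qed.

Definition coef (f : R) : mexp n -> D :=
  epsilon (inhabits (fun _ => 0)) (fun F => exists s, rep f s F).

Lemma coef_rep f : exists s, rep f s (coef f).
Proof.
have [s [F H]] := exists_rep f.
by apply: (epsilon_spec (inhabits (fun _ => 0)) (fun F => exists s, rep f s F)); exists F, s.
Qed.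

Lemma coefP f s F : rep f s F -> forall a, coef f a = F a.
Proof. by have [t Ht] := coef_rep f; move=> H; apply: rep_uniq Ht H. Qed.

Lemma coef0 a : coef 0 a = 0.
Proof. by rewrite (@coefP 0 [::] (fun _ => 0)) //; split => //; rewrite big_nil. Qed.

Lemma coefD f g a : coef (f + g) a = coef f a + coef g a.
Proof.
have [s [us Fs ef]] := coef_rep f; have [t [ut Gt eg]] := coef_rep g.
set u := undup (s ++ t).
have uu : uniq u by apply: undup_uniq.
have su : {subset s <= u} by move=> b bs; rewrite mem_undup mem_cat bs.
have tu : {subset t <= u} by move=> b bt; rewrite mem_undup mem_cat bt orbT.
apply: (@coefP _ u (fun b => coef f b + coef g b)); split => //.
  by move=> b; rewrite mem_undup mem_cat negb_or => /andP [/Fs -> /Gt ->]; rewrite addr0.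
rewrite (eq_bigr (fun b => iota (coef f b) * m b + iota (coef g b) * m b)); last first.
  by move=> b _; rewrite rmorphD mulrDl.
rewrite big_split /= {1}ef {1}eg; congr (_ + _); apply: sum_ext => //.
  by move=> b /Fs ->; rewrite rmorph0 mul0r.
by move=> b /Gt ->; rewrite rmorph0 mul0r.
Qed.

Lemma coefZ d f a : coef (iota d * f) a = d * coef f a.
Proof.
have [s [us Fs ef]] := coef_rep f.
apply: (@coefP _ s (fun b => d * coef f b)); split => //.
  by move=> b /Fs ->; rewrite mulr0.
rewrite {1}ef mulr_sumr; apply: eq_bigr => b _; by rewrite rmorphM mulrA.
Qed.

Lemma coefN f a : coef (- f) a = - coef f a.
Proof. by rewrite -mulN1r -(rmorphN1 iota) coefZ mulN1r. Qed.

Lemma coefB f g a : coef (f - g) a = coef f a - coef g a.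
Proof. by rewrite coefD coefN. Qed.

Lemma coef_monom d b a : coef (iota d * m b) a = if a == b then d else 0.
Proof.
apply: (@coefP _ [:: b] (fun a => if a == b then d else 0)); split => //.
  by move=> c; rewrite inE => /negPf ->.
by rewrite big_seq1 eqxx.
Qed.

Lemma coef_sum (I : Type) (r : seq I) (F : I -> R) a :
  coef (\sum_(i <- r) F i) a = \sum_(i <- r) coef (F i) a.
Proof.
elim: r => [|i r IH]; first by rewrite !big_nil coef0.
by rewrite !big_cons coefD IH.
Qed.


Lemma maddC (a b : mexp n) : madd a b = madd b a :> mexp n.
Proof. by apply/ffunP => i; rewrite !ffunE addnC. Qed.
Lemma madd0 (a : mexp n) : madd a (mzero n) = a.
Proof. by apply/ffunP => i; rewrite !ffunE addn0. Qed.
Lemma add0m (a : mexp n) : madd (mzero n) a = a.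
Proof. by rewrite maddC madd0. Qed.
Lemma maddI (a b c : mexp n) : madd a c = madd b c -> a = b.
Proof. move/ffunP => H; apply/ffunP => i; move: (H i); rewrite !ffunE; exact: addIn. Qed.

Lemma le_refl a : le a a.
Proof. by case: Hle => H _. Qed.
Lemma le_anti a b : le a b -> le b a -> a = b.
Proof. by case: Hle => _ [H _] ? ?; apply: H; apply/andP. Qed.
Lemma le_trans a b c : le a b -> le b c -> le a c.
Proof. by case: Hle => _ [_ [H _]]; apply: H. Qed.
Lemma le_total a b : le a b || le b a.
Proof. by case: Hle => _ [_ [_ [H _]]]. Qed.
Lemma le0 a : le (mzero n) a.
Proof. by case: Hle => _ [_ [_ [_ [H _]]]]. Qed.
Lemma leD a b c : le a b -> le (madd a c) (madd b c).
Proof. by case: Hle => _ [_ [_ [_ [_ H]]]]; apply: H. Qed.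
Lemma leDD a b c d : le a b -> le c d -> le (madd a c) (madd b d).
Proof.
move=> ab cd; apply: (le_trans (leD c ab)).
by rewrite (maddC b c) (maddC b d); apply: leD.
Qed.

Definition ltm a b := le a b && (a != b).

Lemma ltDle a b c d : ltm a b -> le c d -> ltm (madd a c) (madd b d).
Proof.
move=> /andP [ab nab] cd; apply/andP; split; first exact: leDD.
apply/eqP => E; move/eqP: nab; apply.
apply: (@maddI _ _ c); apply: le_anti; first exact: leD.
by rewrite E (maddC b c) (maddC b d); apply: leD.
Qed.

Lemma le_ltm_trans a b c : le a b -> ltm b c -> ltm a c.
Proof.
move=> ab /andP [bc nbc]; apply/andP; split; first exact: le_trans bc.
apply/eqP => E; move/eqP: nbc; apply; apply: le_anti => //.
by rewrite -E.
Qed.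

Definition bnd f e := forall a, coef f a != 0 -> le a e.
Definition lead f e := coef f e != 0 /\ bnd f e.
Definition small f e := forall a, coef f a != 0 -> ltm a e.

Lemma std_of f : exists s, std_left iota x f s (coef f) /\
  forall a, (a \in s) = (coef f a != 0).
Proof.
have [s [us Fs ef]] := coef_rep f.
exists [seq a <- s | coef f a != 0]; split; last first.
  move=> a; rewrite mem_filter; case: (boolP (coef f a != 0)) => //= H.
  by case: (boolP (a \in s)) => // /Fs E; rewrite E eqxx in H.
split; first exact: filter_uniq.
  by move=> a; rewrite mem_filter => /andP [].
rewrite big_filter big_mkcond /= {1}ef; apply: eq_bigr => a _.
by case: ifP => // /negbFE /eqP ->; rewrite rmorph0 mul0r.
Qed.

Lemma std_coef f s c : std_left iota x f s c ->
  forall a, coef f a = if a \in s then c a else 0.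
Proof.
move=> [us cs ef]; apply: (@coefP f s (fun a => if a \in s then c a else 0)); split => //.
  by move=> a /negPf ->.
by rewrite {1}ef; apply: eq_big_seq => a ->.
Qed.

Lemma is_exp_lead f e : is_exp iota x le f e <-> lead f e.
Proof.
split.
  move=> [s [c [st es bs]]]; have E := std_coef st; case: st => us cs _.
  split; first by rewrite E es; apply: cs.
  move=> a; rewrite E; case: ifP => [/bs //|]; by rewrite eqxx.
move=> [c0 b]; have [s [st ms]] := std_of f.
by exists s, (coef f); split => //; [rewrite ms | move=> a; rewrite ms; apply: b].
Qed.

Lemma lcoef_coef f e d : lcoef iota x f e d <-> coef f e = d.
Proof.
split.
  move=> [s [c [st H]]]; rewrite (std_coef st e).
  by case: H => [[-> ->]|[/negPf -> ->]].
move=> E; have [s [st ms]] := std_of f; exists s, (coef f); split => //.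
case: (boolP (e \in s)) => es; [left | right]; split => //.
by move: es; rewrite ms negbK => /eqP <-.
Qed.

Lemma leadM f g ef eg : lead f ef -> lead g eg -> lead (f * g) (madd ef eg).
Proof. by move=> /is_exp_lead Hf /is_exp_lead Hg; apply/is_exp_lead; apply: HR.2. Qed.

Lemma lead_uniq f e e' : lead f e -> lead f e' -> e = e'.
Proof. by move=> [c1 b1] [c2 b2]; apply: le_anti; [apply: b2|apply: b1]. Qed.

Lemma lead_neq0 f e : lead f e -> f != 0.
Proof. by move=> [c _]; apply/eqP => E; rewrite E coef0 eqxx in c. Qed.

Lemma exists_max (s : seq (mexp n)) : s != [::] ->
  exists2 mx, mx \in s & forall a, a \in s -> le a mx.
Proof.
elim: s => [//|a s IH] _.
case: (eqVneq s [::]) => [->|sn].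
  by exists a; rewrite ?inE // => b; rewrite inE => /eqP ->; apply: le_refl.
have [mx ms H] := IH sn.
case/orP: (le_total a mx) => am.
  exists mx; first by rewrite inE ms orbT.
  by move=> b; rewrite inE => /orP [/eqP ->|/H].
exists a; first by rewrite inE eqxx.
by move=> b; rewrite inE => /orP [/eqP ->|/H bm]; [apply: le_refl | apply: le_trans am].
Qed.

Lemma lead_exists f : f != 0 -> exists e, lead f e.
Proof.
move=> fn; have [s [st ms]] := std_of f.
have sn : s != [::].
  apply: contra fn => /eqP s0; case: st => _ _ ->; by rewrite s0 big_nil.
have [mx mxs H] := exists_max sn.
exists mx; split; first by rewrite -ms.
by move=> a; rewrite -ms; apply: H.
Qed.

Lemma bnd0 e : bnd 0 e.
Proof. by move=> a; rewrite coef0 eqxx. Qed.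
Lemma small0 e : small 0 e.
Proof. by move=> a; rewrite coef0 eqxx. Qed.

Lemma bnd_lead_or f e : bnd f e -> f = 0 \/ exists2 e', lead f e' & le e' e.
Proof.
move=> b; case: (eqVneq f 0) => [->|fn]; first by left.
right; have [e' [c' b']] := lead_exists fn; exists e' => //; exact: b.
Qed.

Lemma small_lead_or f e : small f e -> f = 0 \/ exists2 e', lead f e' & ltm e' e.
Proof.
move=> b; case: (eqVneq f 0) => [->|fn]; first by left.
right; have [e' [c' b']] := lead_exists fn; exists e' => //; exact: b.
Qed.

Lemma bndM f g e e' : bnd f e -> bnd g e' -> bnd (f * g) (madd e e').
Proof.
move=> /bnd_lead_or [->|[ef lf le1]]; first by move=> _; rewrite mul0r; apply: bnd0.
move=> /bnd_lead_or [->|[eg lg le2]]; first by rewrite mulr0; apply: bnd0.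
move=> a /(proj2 (leadM lf lg)) H; apply: (le_trans H); exact: leDD.
Qed.

Lemma smallM f g e e' : small f e -> bnd g e' -> small (f * g) (madd e e').
Proof.
move=> /small_lead_or [->|[ef lf le1]]; first by move=> _; rewrite mul0r; apply: small0.
move=> /bnd_lead_or [->|[eg lg le2]]; first by rewrite mulr0; apply: small0.
move=> a /(proj2 (leadM lf lg)) H; apply: (le_ltm_trans H); exact: ltDle.
Qed.

Lemma smallMr f g e e' : bnd g e' -> small f e -> small (g * f) (madd e' e).
Proof.
move=> /bnd_lead_or [->|[eg lg le2]]; first by move=> _; rewrite mul0r; apply: small0.
move=> /small_lead_or [->|[ef lf le1]]; first by rewrite mulr0; apply: small0.
move=> a /(proj2 (leadM lg lf)) H; apply: (le_ltm_trans H).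
by rewrite maddC (maddC e'); apply: ltDle.
Qed.

Lemma small_coef f e : small f e -> coef f e = 0.
Proof.
move=> H; apply/eqP; apply/negP => /negP /H /andP [_]; by rewrite eqxx.
Qed.

Lemma lead_bnd f e : lead f e -> bnd f e.
Proof. by case. Qed.

Lemma lead_monom a : lead (m a) a.
Proof.
have E : m a = iota 1 * m a by rewrite rmorph1 mul1r.
split; first by rewrite E coef_monom eqxx oner_neq0.
by move=> b; rewrite E coef_monom; case: (eqVneq b a) => [-> _|_]; [exact: le_refl | rewrite eqxx].
Qed.

Lemma monom0 : m (mzero n) = 1.
Proof. by rewrite /monom big1 // => i _; rewrite ffunE expr0. Qed.

Lemma coef_iota d a : coef (iota d) a = if a == mzero n then d else 0.
Proof. by rewrite -[iota d]mulr1 -monom0 coef_monom. Qed.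

Lemma lead_iota d : d != 0 -> lead (iota d) (mzero n).
Proof.
move=> dn; split; first by rewrite coef_iota eqxx.
by move=> b; rewrite coef_iota; case: (eqVneq b (mzero n)) => [-> _|_]; [exact: le_refl | rewrite eqxx].
Qed.

Lemma monomX (e : mexp n) (j : 'I_n) :
  (forall i : 'I_n, (j < i)%N -> e i = 0%N) -> m e * x j = m (madd e (eps j)).
Proof.
move=> He; rewrite /monom.
pose F := fun k : nat => x (insubd j k) ^+ e (insubd j k).
pose F' := fun k : nat => x (insubd j k) ^+ (madd e (eps j)) (insubd j k).
have E1 : \prod_(i < n) x i ^+ e i = \prod_(0 <= k < n) F k.
  by rewrite big_mkord; apply: eq_bigr => i _; rewrite /F valKd.
have E2 : \prod_(i < n) x i ^+ (madd e (eps j)) i = \prod_(0 <= k < n) F' k.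
  by rewrite big_mkord; apply: eq_bigr => i _; rewrite /F' valKd.
have jn : (j.+1 <= n)%N by apply: ltn_ord.
have B1 : \prod_(0 <= k < n) F k = \prod_(0 <= k < j.+1) F k * \prod_(j.+1 <= k < n) F k.
  by apply: big_cat_nat.
have B2 : \prod_(0 <= k < n) F' k = \prod_(0 <= k < j.+1) F' k * \prod_(j.+1 <= k < n) F' k.
  by apply: big_cat_nat.
rewrite E1 E2 B1 B2.
have T1 : \prod_(j.+1 <= k < n) F k = 1.
  rewrite big_nat_cond big1 // => k /andP [/andP [jk kn] _].
  rewrite /F He ?expr0 // val_insubd kn //.
have T2 : \prod_(j.+1 <= k < n) F' k = 1.
  rewrite big_nat_cond big1 // => k /andP [/andP [jk kn] _].
  have ij : insubd j k != j.
    by apply/eqP => /(congr1 val); rewrite val_insubd kn => kj; rewrite kj ltnn in jk.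
  rewrite /F' ffunE He ?ffunE ?(negPf ij) ?expr0 //.
  by rewrite val_insubd kn.
rewrite T1 T2 !mulr1 (big_nat_recr j 0 F) // (big_nat_recr j 0 F') //= /F /F' valKd ffunE ffunE eqxx addn1 exprSr mulrA.
congr (_ * _ * _); apply: eq_big_nat => k /andP [_ kj].
have ij : insubd j k != j.
  apply/eqP => /(congr1 val); rewrite val_insubd (ltn_trans kj (ltn_ord j)) => E.
  by rewrite E ltnn in kj.
by rewrite ffunE ffunE (negPf ij) addn0.
Qed.

Lemma monom_eps (j : 'I_n) : m (eps j) = x j.
Proof.
by rewrite -(add0m (eps j)) -monomX ?monom0 ?mul1r // => i _; rewrite ffunE.
Qed.

Lemma lead_x (j : 'I_n) : lead (x j) (eps j).
Proof. by rewrite -monom_eps; apply: lead_monom. Qed.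

Lemma bnd_iota d : bnd (iota d) (mzero n).
Proof.
move=> b; rewrite coef_iota; case: (eqVneq b (mzero n)) => [-> _|_]; [exact: le_refl | by rewrite eqxx].
Qed.

Lemma coef_x d (i : 'I_n) b : coef (iota d * x i) b = if b == eps i then d else 0.
Proof. by rewrite -monom_eps coef_monom. Qed.

Definition sig (i : 'I_n) (a : D) := coef (x i * iota a) (eps i).

Lemma bnd_xi i a : bnd (x i * iota a) (eps i).
Proof. by have := bndM (lead_bnd (lead_x i)) (bnd_iota (d:=a)); rewrite madd0. Qed.

Lemma sig_small i a : small (x i * iota a - iota (sig i a) * x i) (eps i).
Proof.
move=> b; rewrite coefB coef_x; case: (eqVneq b (eps i)) => [->|bn].
  by rewrite subrr eqxx.
by rewrite subr0 => /(bnd_xi) H; apply/andP; split.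
Qed.

Lemma sig0 i : sig i 0 = 0.
Proof. by rewrite /sig rmorph0 mulr0 coef0. Qed.
Lemma sigD i a b : sig i (a + b) = sig i a + sig i b.
Proof. by rewrite /sig rmorphD mulrDr coefD. Qed.
Lemma sigB i a b : sig i (a - b) = sig i a - sig i b.
Proof. by rewrite /sig rmorphB mulrBr coefB. Qed.
Lemma sig1 i : sig i 1 = 1.
Proof. by rewrite /sig rmorph1 mulr1 -[x i]mul1r -(rmorph1 iota) coef_x eqxx. Qed.

Lemma coef_xi1 i : coef (x i) (eps i) = 1.
Proof. by rewrite -[x i]mul1r -(rmorph1 iota) coef_x eqxx. Qed.

Lemma xi_dec i a : x i * iota a = iota (sig i a) * x i + (x i * iota a - iota (sig i a) * x i).
Proof. by rewrite addrC subrK. Qed.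

Lemma sigM i a b : sig i (a * b) = sig i a * sig i b.
Proof.
transitivity (coef (x i * iota a * iota b) (eps i)); first by rewrite /sig rmorphM mulrA.
rewrite xi_dec; set pa := (x i * iota a - _).
rewrite mulrDl -mulrA.
rewrite xi_dec; set pb := (x i * iota b - _).
rewrite mulrDr mulrA -rmorphM !coefD coefZ coef_xi1 mulr1 coefZ.
rewrite (small_coef (sig_small (i:=i) (a:=b))) mulr0 addr0.
have H : small (pa * iota b) (madd (eps i) (mzero n)) by apply: smallM (sig_small (i:=i) (a:=a)) (bnd_iota (d:=b)).
by rewrite madd0 in H; rewrite (small_coef H) addr0.
Qed.

Lemma sig_neq0 i a : a != 0 -> sig i a != 0.
Proof.
move=> an; have := leadM (lead_x i) (lead_iota an); rewrite madd0; by case.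
Qed.

Lemma sig_inj i : injective (sig i).
Proof.
move=> a b E; apply/eqP; rewrite -subr_eq0; apply/negP => /negP /(sig_neq0 i).
by rewrite sigB E subrr eqxx.
Qed.

Definition sigR (i : 'I_n) : {rmorphism D -> D} :=
  HB.pack (sig i) (GRing.isNmodMorphism.Build _ _ (sig i) (sig0 i, sigD i))
                  (GRing.isMonoidMorphism.Build _ _ (sig i) (sig1 i, sigM i)).

Lemma sigR_lcoef i a : lcoef iota x (x i * iota a) (eps i) (sigR i a).
Proof. by apply/lcoef_coef. Qed.

Lemma coef_m a b : coef (m a) b = if b == a then 1 else 0.
Proof. by rewrite -[m a]mul1r -(rmorph1 iota) coef_monom. Qed.

Lemma small_m a e : ltm a e -> small (m a) e.
Proof. by move=> ae b; rewrite coef_m; case: (eqVneq b a) => [->|]; rewrite ?eqxx. Qed.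

Lemma sum_pred1 (s : seq (mexp n)) (F : mexp n -> D) e : uniq s ->
  (e \notin s -> F e = 0) ->
  \sum_(a <- s) (if a == e then F a else 0) = F e.
Proof.
move=> us Fe; case: (boolP (e \in s)) => es.
  rewrite (bigD1_seq _ es us) /= eqxx big1 ?addr0 // => a /negPf -> //.
rewrite big1_seq ?Fe // => a /andP [_ as']; case: eqP => // E.
by rewrite -E as' in es.
Qed.

Lemma coef_mulx h (e : mexp n) (j : 'I_n) : bnd h e -> (forall i : 'I_n, (j < i)%N -> e i = 0%N) ->
  coef (h * x j) (madd e (eps j)) = coef h e.
Proof.
move=> bh He; have [s [us Fs eh]] := coef_rep h.
rewrite {1}eh mulr_suml coef_sum.
transitivity (\sum_(a <- s) (if a == e then coef h a else 0)); last by apply: sum_pred1 => // /Fs.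
apply: eq_bigr => a _; rewrite -mulrA coefZ.
case: (eqVneq a e) => [->|ae].
  by rewrite monomX // coef_m eqxx mulr1.
case: (eqVneq (coef h a) 0) => [->|hn]; first by rewrite mul0r.
have lae : ltm a e by apply/andP; split => //; apply: bh.
have := smallM (small_m lae) (lead_bnd (lead_x j)).
by move/small_coef ->; rewrite mulr0.
Qed.

Definition Good e := forall d, exists c, coef (m e * iota c) e = d.

Lemma good0 : Good (mzero n).
Proof. by move=> d; exists d; rewrite monom0 mul1r coef_iota eqxx. Qed.

Lemma good_step (e : mexp n) (j : 'I_n) : (forall i : 'I_n, (j < i)%N -> e i = 0%N) ->
  (forall d, exists c, sig j c = d) -> Good e -> Good (madd e (eps j)).
Proof.
move=> He Hs Hg d; have [c' Hc'] := Hg d; have [c Hc] := Hs c'; exists c.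
rewrite -monomX // -mulrA xi_dec mulrDr mulrA coefD.
rewrite (small_coef (smallMr (lead_bnd (lead_monom e)) (sig_small (i:=j) (a:=c)))) addr0.
have bh : bnd (m e * iota (sig j c)) e.
  by have := bndM (lead_bnd (lead_monom e)) (bnd_iota (d:=sig j c)); rewrite madd0.
by rewrite coef_mulx // Hc.
Qed.

Lemma good_all : (forall (j : 'I_n) d, exists c, sig j c = d) -> forall a, Good a.
Proof.
move=> Hs.
suff H : forall k (a : mexp n), (forall i : 'I_n, (k <= i)%N -> a i = 0%N) -> Good a.
  by move=> a; apply: (H n) => i; rewrite leqNgt ltn_ord.
elim => [|k IH] a Ha.
  have -> : a = mzero n by apply/ffunP => i; rewrite ffunE Ha.
  exact: good0.
case: (ltnP k n) => kn; last first.
  by apply: IH => i; rewrite leqNgt (leq_trans (ltn_ord i) kn).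
pose j := Ordinal kn.
pose b := fun m0 : nat => [ffun i => if i == j then m0 else a i] : mexp n.
have Gb : forall m0, Good (b m0).
  elim => [|m0 IHm].
    apply: IH => i ki; rewrite ffunE; case: eqP => // ij.
    apply: Ha; rewrite ltn_neqAle ki andbT; apply/eqP => E; apply: ij.
    by apply: val_inj; rewrite /= E.
  have -> : b m0.+1 = madd (b m0) (eps j).
    by apply/ffunP => i; rewrite !ffunE; case: eqP => _; rewrite ?addn1 ?addn0.
  apply: good_step => // i ji; rewrite ffunE; case: eqP => [E|_].
    by rewrite E ltnn in ji.
  exact: Ha.
have -> : a = b (a j) by apply/ffunP => i; rewrite ffunE; case: eqP => [->|].
exact: Gb.
Qed.

Lemma exists_min_nat (h : nat -> nat) k :
  exists i, (k <= i)%N /\ forall j, (k <= j)%N -> (h i <= h j)%N.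
Proof.
suff H : forall v j, (k <= j)%N -> (h j <= v)%N ->
    exists i, (k <= i)%N /\ forall j, (k <= j)%N -> (h i <= h j)%N.
  by apply: (H (h k) k).
elim => [|v IH] j kj hj.
  exists j; split => // j' _; move: hj; rewrite leqn0 => /eqP ->; exact: leq0n.
case: (classic (exists j', (k <= j')%N /\ (h j' < h j)%N)) => [[j' [kj' hj']]|nH].
  apply: (IH j') => //; by rewrite -ltnS (leq_trans hj').
exists j; split => // j' kj'; rewrite leqNgt; apply/negP => hl; apply: nH; by exists j'.
Qed.

Lemma nat_subseq (h : nat -> nat) : exists psi : nat -> nat,
  (forall t, psi t < psi t.+1)%N /\ (forall t, h (psi t) <= h (psi t.+1))%N.
Proof.
pose idx k := proj1_sig (constructive_indefinite_description _ (exists_min_nat h k)).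
have idxP : forall k, (k <= idx k)%N /\ forall j, (k <= j)%N -> (h (idx k) <= h j)%N.
  by move=> k; rewrite /idx; case: constructive_indefinite_description.
pose kk := fix kk t := match t with 0 => 0%N | t'.+1 => (idx (kk t')).+1 end.
exists (fun t => idx (kk t)); split => t /=.
  by case: (idxP (idx (kk t)).+1).
case: (idxP (kk t)) => k1 H; apply: H.
case: (idxP (idx (kk t)).+1) => k2 _.
by apply: leq_trans k2; apply: leq_trans (leqnSn _).
Qed.

Lemma dickson (f : nat -> mexp n) : exists i j, (i < j)%N /\ forall c, (f i c <= f j c)%N.
Proof.
suff H : forall k, exists phi : nat -> nat, (forall t, phi t < phi t.+1)%N /\
    forall t (c : 'I_n), (c < k)%N -> (f (phi t) c <= f (phi t.+1) c)%N.
  have [phi [H1 H2]] := H n; exists (phi 0%N), (phi 1%N); split => // c; exact: H2.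
elim => [|k [phi [H1 H2]]].
  by exists id; split.
case: (ltnP k n) => kn; last first.
  exists phi; split => // t c _; apply: H2; exact: leq_trans (ltn_ord c) kn.
pose c0 := Ordinal kn.
have [psi [P1 P2]] := nat_subseq (fun t => f (phi t) c0).
have phimono : {homo phi : i j / (i < j)%N >-> (i < j)%N}.
  by apply: homo_ltn => // ? ? ?; apply: ltn_trans.
have coordmono : forall (c : 'I_n) a d, (c < k)%N -> (f (phi a) c <= f (phi (a + d)) c)%N.
  move=> c a d ck; elim: d => [|d IHd]; first by rewrite addn0.
  by apply: leq_trans IHd _; rewrite addnS; apply: H2.
exists (fun t => phi (psi t)); split => [t|t c]; first exact: phimono.
rewrite ltnS leq_eqVlt => /orP [/eqP E|ck].
  by have -> : c = c0 by apply: val_inj.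
have -> : psi t.+1 = (psi t + (psi t.+1 - psi t))%N by rewrite subnKC // ltnW.
exact: coordmono.
Qed.

Lemma ltm_trans a b c : ltm a b -> ltm b c -> ltm a c.
Proof. by move=> /andP [ab _]; apply: le_ltm_trans. Qed.

Lemma ltm_wf : well_founded ltm.
Proof.
move=> a; apply: NNPP => nA.
have step : forall b, ~ Acc ltm b -> exists b', ltm b' b /\ ~ Acc ltm b'.
  move=> b nb; apply: NNPP => nex; apply: nb; constructor => b' lb.
  apply: NNPP => nb'; apply: nex; by exists b'.
pose T := {b : mexp n | ~ Acc ltm b}.
pose nxt (t : T) : T := let H := constructive_indefinite_description _ (step _ (proj2_sig t)) in
  exist _ (proj1_sig H) (proj2 (proj2_sig H)).
have nxtP : forall t, ltm (proj1_sig (nxt t)) (proj1_sig t).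
  by move=> t; rewrite /nxt; case: constructive_indefinite_description => b [].
pose f k := proj1_sig (iter k nxt (exist _ a nA)).
have dec : forall i d, ltm (f (i + d.+1)%N) (f i).
  move=> i; elim => [|d IHd]; first by rewrite addn1 /f iterS; apply: nxtP.
  apply: ltm_trans IHd; rewrite addnS /f iterS; apply: nxtP.
have [i [j [ij H]]] := dickson f.
pose d := [ffun c => (f j c - f i c)%N] : mexp n.
have E : f j = madd d (f i) by apply/ffunP => c; rewrite !ffunE subnK.
have lij : le (f i) (f j) by rewrite E -{1}(add0m (f i)); apply: leD; apply: le0.
have := dec i (j - i.+1)%N; rewrite -addSnnS subnKC // => /andP [lji nji].
by move/negP: nji; apply; apply/eqP; apply: le_anti.
Qed.

Lemma lead_sum (t : seq (mexp n)) (F : mexp n -> R) mx : uniq t ->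
  (forall a, a \in t -> lead (F a) a) -> mx \in t -> (forall a, a \in t -> le a mx) ->
  lead (\sum_(a <- t) F a) mx /\ coef (\sum_(a <- t) F a) mx = coef (F mx) mx.
Proof.
move=> ut Hl mt Hm.
have E : coef (\sum_(a <- t) F a) mx = coef (F mx) mx.
  rewrite coef_sum (bigD1_seq _ mt ut) /= big1_seq ?addr0 // => a /andP [amx at'].
  apply/eqP; apply/negP => /negP /(proj2 (Hl a at')) H.
  by move/eqP: amx; apply; apply: le_anti => //; apply: Hm.
split => //; split; first by rewrite E; case: (Hl mx mt).
move=> b; rewrite coef_sum.
case: (boolP (has (fun a => coef (F a) b != 0) t)) => [/hasP [a at' H] _|/hasPn H].
  by apply: le_trans (Hm a at'); apply: (proj2 (Hl a at')).
by rewrite big1_seq ?eqxx // => a /andP [_ /H]; rewrite negbK => /eqP.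
Qed.

Lemma lead_term a c : c != 0 -> lead (m a * iota c) a.
Proof. by move=> cn; have := leadM (lead_monom a) (lead_iota cn); rewrite madd0. Qed.

Lemma right_sum_filter (s : seq (mexp n)) (C : mexp n -> D) :
  \sum_(a <- s) m a * iota (C a) = \sum_(a <- [seq a <- s | C a != 0]) m a * iota (C a).
Proof.
rewrite big_filter [RHS]big_mkcond; apply: eq_bigr => a _.
by case: ifP => // /negbFE /eqP ->; rewrite rmorph0 mulr0.
Qed.

Lemma right_indep (s : seq (mexp n)) (c : mexp n -> D) : uniq s ->
  \sum_(a <- s) m a * iota (c a) = 0 -> forall a, a \in s -> c a = 0.
Proof.
move=> us E a0 a0s; apply/eqP; apply/negP => /negP ca0.
set t := [seq a <- s | c a != 0].
have ut : uniq t by apply: filter_uniq.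
have tn : t != [::].
  apply/eqP => t0; have : a0 \in t by rewrite mem_filter ca0.
  by rewrite t0.
have [mx mxt Hm] := exists_max tn.
have Hl : forall a, a \in t -> lead (m a * iota (c a)) a.
  by move=> a; rewrite mem_filter => /andP [ca _]; apply: lead_term.
have [L _] := lead_sum ut Hl mxt Hm.
by move: (lead_neq0 L); rewrite -right_sum_filter E eqxx.
Qed.

Lemma to_right (ps : seq (mexp n * D)) : exists s (c : mexp n -> D),
  \sum_(p <- ps) m p.1 * iota p.2 = \sum_(a <- s) m a * iota (c a).
Proof.
have GD : forall a u v, (fun a u => m a * iota u) a (u + v) =
   (fun a u => m a * iota u) a u + (fun a u => m a * iota u) a v.
  by move=> a u v /=; rewrite rmorphD mulrDr.
have [t [C [_ _ E]]] := normalize2 GD ps.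
by exists t, C.
Qed.

Lemma span : (forall (j : 'I_n) d, exists c, sig j c = d) ->
  forall f, exists (ps : seq (mexp n * D)), f = \sum_(p <- ps) m p.1 * iota p.2.
Proof.
move=> Hs.
suff H : forall al f, bnd f al -> exists (ps : seq (mexp n * D)), f = \sum_(p <- ps) m p.1 * iota p.2.
  move=> f; case: (eqVneq f 0) => [->|fn]; first by exists [::]; rewrite big_nil.
  have [e [_ b]] := lead_exists fn; exact: (H e).
elim/(well_founded_ind ltm_wf) => al IH f bf.
have [c Hc] := good_all Hs al (coef f al).
set g := f - m al * iota c.
have bt : bnd (m al * iota c) al.
  by have := bndM (lead_bnd (lead_monom al)) (bnd_iota (d:=c)); rewrite madd0.
have sg : small g al.
  move=> b; rewrite coefB; case: (eqVneq b al) => [->|ba].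
    by rewrite Hc subrr eqxx.
  move=> H; apply/andP; split => //.
  case: (eqVneq (coef f b) 0) => [E|fb]; last exact: bf.
  by apply: bt; move: H; rewrite E sub0r oppr_eq0.
have fE : f = g + m al * iota c by rewrite subrK.
case: (small_lead_or sg) => [g0|[e' lg le']].
  by exists [:: (al, c)]; rewrite fE g0 add0r big_seq1.
have [ps Eps] := IH e' le' g (lead_bnd lg).
exists ((al, c) :: ps); by rewrite big_cons fE Eps addrC.
Qed.

Lemma sig_surj : right_polynomial iota x -> forall (j : 'I_n) d, exists c, sig j c = d.
Proof.
move=> [Hsp _] j d.
case: (eqVneq d 0) => [->|dn]; first by exists 0; rewrite sig0.
set f := iota d * x j.
have lf : lead f (eps j) by have := leadM (lead_iota dn) (lead_x j); rewrite add0m.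
have [s [c Ef]] := Hsp f.
have GD : forall a u v, (fun a u => m a * iota u) a (u + v) =
   (fun a u => m a * iota u) a u + (fun a u => m a * iota u) a v.
  by move=> a u v /=; rewrite rmorphD mulrDr.
have [t [C [ut _ Et]]] := normalize GD s c.
rewrite Et right_sum_filter in Ef.
set t' := [seq a <- t | C a != 0] in Ef.
have ut' : uniq t' by apply: filter_uniq.
have tn : t' != [::].
  apply/eqP => t0; move: (lead_neq0 lf); by rewrite Ef t0 big_nil eqxx.
have [mx mxt Hm] := exists_max tn.
have Hl : forall a, a \in t' -> lead (m a * iota (C a)) a.
  by move=> a; rewrite mem_filter => /andP [ca _]; apply: lead_term.
have [L Ec] := lead_sum ut' Hl mxt Hm.
rewrite -Ef in L Ec.
have E := lead_uniq L lf; subst mx.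
exists (C (eps j)); move: Ec; rewrite /f coef_x eqxx monom_eps => ->.
by [].
Qed.

Lemma main_equiv : right_polynomial iota x <->
  (forall i : 'I_n, exists sigma : {rmorphism D -> D},
      bijective sigma /\
      (forall a : D, lcoef iota x (x i * iota a) (eps i) (sigma a))).
Proof.
split.
  move=> HRp i; exists (sigR i); split; last exact: sigR_lcoef.
  have Hs := sig_surj HRp i.
  pose g d := proj1_sig (constructive_indefinite_description _ (Hs d)).
  have gK : forall d, sig i (g d) = d.
    by move=> d; rewrite /g; case: constructive_indefinite_description.
  exists g => a /=; last exact: gK.
  by apply: (@sig_inj i); rewrite gK.
move=> Hsig.
have Hs : forall (j : 'I_n) d, exists c, sig j c = d.
  move=> j d; have [sigma [[g gK Kg] Hl]] := Hsig j.
  exists (g d); have := Hl (g d); move/lcoef_coef; rewrite Kg; exact.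
split.
  move=> f; have [ps Eps] := span Hs f; have [s [c E]] := to_right ps.
  by exists s, c; rewrite Eps E.
exact: right_indep.
Qed.
End PBW.

Theorem mainTheorem12 (D : unitRingType) (R : nzRingType)
  (iota : {rmorphism D -> R}) (n : nat) (x : 'I_n -> R) (le : rel (mexp n))
  (HD : forall a : D, a != 0 -> a \is a GRing.unit)
  (Hle : admissible le)
  (HR : left_PBW iota x le) :
  right_polynomial iota x <->
  (forall i : 'I_n, exists sigma : {rmorphism D -> D},
      bijective sigma /\
      (forall a : D, lcoef iota x (x i * iota a) (eps i) (sigma a))).
Proof. exact: (main_equiv Hle HR). Qed.
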